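(* Assume the standing setup below. Then for every phase change number $s_i$ of $X$ with $i\ge 1$, the function $\pi_0V_{s_i}(X)\to\pi_0V_{s_i}(Y)$, $[x]_{s_i,X}\mapsto[x]_{s_i,Y}$, induced by the inclusion $X\subseteq Y$, is a bijection.
   Context: For a finite set $Z\subset\mathbb{R}^n$ and a real number $s\ge 0$, the Vietoris–Rips complex $V_s(Z)$ is the simplicial complex with vertex set $Z$ whose simplices are the nonempty subsets $\sigma\subseteq Z$ with $d(z,z')\le s$ for all $z,z'\in\sigma$ ($d$ the Euclidean distance). For $z\in Z$, $[z]_{s,Z}\subseteq Z$ denotes the set of vertices of the path component of $V_s(Z)$ containing $z$, and $\pi_0V_s(Z)$ is the set of path components. Standing setup: $X\subset\mathbb{R}^n$ is a finite set with at least two points, $y\in\mathbb{R}^n\setminus X$, $Y=X\sqcup\{y\}$. The phase change numbers of $X$ are the distinct values $0=s_0<s_1<\dots<s_k$ of $d(x,x')$ for $x,x'\in X$. There are $x_0\in X$ and a real $r>0$ with $d(y,x_0)<r$ and $r<s_{i+1}-s_i$ for all $0\le i<k$. *)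

(* Defs.v *)
From Stdlib Require Export Reals List Relations.
Open Scope R_scope.

(* A point of R^n is a list of n reals (length hypotheses are stated explicitly). *)
Definition point := list R.

Definition dist (p q : point) : R :=
  sqrt (fold_right Rplus 0 (map (fun ab => (fst ab - snd ab) ^ 2) (combine p q))).

(* Edge relation of the 1-skeleton of the Vietoris-Rips complex V_s(Z). *)
Definition vr_edge (s : R) (Z : list point) (u v : point) : Prop :=
  In u Z /\ In v Z /\ dist u v <= s.

(* [z]_{s,Z}: vertex set of the path component of V_s(Z) containing z. *)
Definition component (s : R) (Z : list point) (z : point) : point -> Prop :=
  fun w => In w Z /\ clos_refl_trans point (vr_edge s Z) z w.

(* pi_0 V_s(Z): the set of path components (as vertex sets). *)
Definition pi0 (s : R) (Z : list point) : Type :=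
  { C : point -> Prop | exists z, In z Z /\ C = component s Z z }.

(* sl = [s_0; ...; s_k] is the strictly increasing list of the distinct values
   of d(x,x') for x,x' in X (the phase change numbers of X). *)
Definition phase_change_list (X : list point) (sl : list R) : Prop :=
  (forall i, (S i < length sl)%nat -> nth i sl 0 < nth (S i) sl 0) /\
  (forall t, In t sl <-> exists x x', In x X /\ In x' X /\ t = dist x x').

(* Main.v *)
Require Import Defs.
From Stdlib Require Import Lra Psatz ProofIrrelevance FunctionalExtensionality PropExtensionality.

Definition ss (p q : point) := fold_right Rplus 0 (map (fun ab => (fst ab - snd ab) ^ 2) (combine p q)).

Lemma ss_cons a p b q : ss (a::p) (b::q) = (a-b)^2 + ss p q.
Proof. reflexivity. Qed.

Lemma ss_ge0 p q : 0 <= ss p q.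
Proof. revert q; induction p as [|a p IH]; intros [|b q]; try (unfold ss; simpl; lra); idtac.
  rewrite ss_cons. specialize (IH q). pose proof (pow2_ge_0 (a-b)). lra. Qed.

Lemma ss_sym p q : ss p q = ss q p.
Proof. revert q; induction p as [|a p IH]; intros [|b q]; try reflexivity.
  rewrite !ss_cons, IH. f_equal. ring. Qed.

Lemma dist_sym p q : dist p q = dist q p.
Proof. unfold dist. fold (ss p q). fold (ss q p). now rewrite ss_sym. Qed.

Lemma mink2 p q u v : 0 <= p -> 0 <= q -> 0 <= u -> 0 <= v ->
  sqrt ((p+q)^2 + (u+v)^2) <= sqrt (p^2+u^2) + sqrt (q^2+v^2).
Proof.
  intros. assert (h1 : 0 <= sqrt (p^2+u^2)) by apply sqrt_pos.
  assert (h2 : 0 <= sqrt (q^2+v^2)) by apply sqrt_pos.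
  assert (e1 : sqrt (p^2+u^2) * sqrt (p^2+u^2) = p^2+u^2) by (apply sqrt_sqrt; nra).
  assert (e2 : sqrt (q^2+v^2) * sqrt (q^2+v^2) = q^2+v^2) by (apply sqrt_sqrt; nra).
  assert (k : p*q+u*v <= sqrt (p^2+u^2) * sqrt (q^2+v^2)).
  { rewrite <- sqrt_mult by nra.
    rewrite <- (sqrt_square (p*q+u*v)) by nra. apply sqrt_le_1_alt. pose proof (pow2_ge_0 (p*v-q*u)). simpl in *. nra. }
  rewrite <- (sqrt_square (sqrt (p^2+u^2) + sqrt (q^2+v^2))) by lra.
  apply sqrt_le_1_alt. nra.
Qed.

Lemma tri a b c : length a = length b -> length b = length c ->
  sqrt (ss a c) <= sqrt (ss a b) + sqrt (ss b c).
Proof.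
  revert b c; induction a as [|x a IH]; intros [|y b] [|z c] H1 H2; simpl in *; try discriminate.
  - unfold ss; simpl. rewrite sqrt_0. lra.
  - injection H1; injection H2; intros E2 E1. specialize (IH b c E1 E2).
    rewrite !ss_cons.
    set (U := ss a b) in *. set (V := ss b c) in *. set (W := ss a c) in *.
    assert (hU : 0 <= U) by apply ss_ge0. assert (hV : 0 <= V) by apply ss_ge0.
    assert (hW : 0 <= W) by apply ss_ge0.
    pose proof (sqrt_sqrt U hU). pose proof (sqrt_sqrt V hV). pose proof (sqrt_sqrt W hW).
    pose proof (sqrt_pos U). pose proof (sqrt_pos V). pose proof (sqrt_pos W).
    assert (ea : forall t, t^2 = Rabs t ^2) by (intro t; now rewrite pow2_abs).
    replace ((x-y)^2 + U) with (Rabs (x-y)^2 + sqrt U^2) by (rewrite <- ea; simpl; lra).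
    replace ((y-z)^2 + V) with (Rabs (y-z)^2 + sqrt V^2) by (rewrite <- ea; simpl; lra).
    eapply Rle_trans; [| apply (mink2 (Rabs (x-y)) (Rabs (y-z)) (sqrt U) (sqrt V)); auto using Rabs_pos].
    apply sqrt_le_1_alt.
    assert (ha : Rabs (x - z) <= Rabs (x-y) + Rabs (y-z)).
    { replace (x-z) with ((x-y)+(y-z)) by ring. apply Rabs_triang. }
    pose proof (Rabs_pos (x-z)). rewrite (ea (x-z)).
    pose proof (Rabs_pos (x-y)). pose proof (Rabs_pos (y-z)).
    simpl. nra.
Qed.

Lemma dist_tri a b c : length a = length b -> length b = length c ->
  dist a c <= dist a b + dist b c.
Proof. apply tri. Qed.

Lemma nth_mono (sl : list R) :
  (forall i, (S i < length sl)%nat -> nth i sl 0 < nth (S i) sl 0) ->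
  forall j k, (j < k)%nat -> (k < length sl)%nat -> nth j sl 0 < nth k sl 0.
Proof.
  intros H j k; induction k as [|k IH]; intros Hjk Hk; [lia|].
  destruct (Nat.eq_dec j k) as [->|Hne]; [apply H; lia|].
  eapply Rlt_trans; [apply IH; lia| apply H; lia].
Qed.

Lemma nth_mono_le (sl : list R) :
  (forall i, (S i < length sl)%nat -> nth i sl 0 < nth (S i) sl 0) ->
  forall j k, (j <= k)%nat -> (k < length sl)%nat -> nth j sl 0 <= nth k sl 0.
Proof.
  intros H j k Hjk Hk. destruct (Nat.eq_dec j k) as [->|]; [lra|].
  left; apply nth_mono; auto; lia.
Qed.

Lemma crt_sym s Z : (forall u v, vr_edge s Z u v -> vr_edge s Z v u) ->
  forall a b, clos_refl_trans point (vr_edge s Z) a b -> clos_refl_trans point (vr_edge s Z) b a.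
Proof.
  intros Hs a b H; induction H.
  - apply rt_step; auto.
  - apply rt_refl.
  - eapply rt_trans; eauto.
Qed.

Lemma edge_sym s Z u v : vr_edge s Z u v -> vr_edge s Z v u.
Proof. intros [? [? ?]]; repeat split; auto. now rewrite dist_sym. Qed.

Lemma crt_mono s y X a b : clos_refl_trans point (vr_edge s X) a b ->
  clos_refl_trans point (vr_edge s (y :: X)) a b.
Proof.
  intro H; induction H.
  - apply rt_step. destruct H as [? [? ?]]; repeat split; simpl; auto.
  - apply rt_refl.
  - eapply rt_trans; eauto.
Qed.

Definition gmap (y x0 p : point) : point :=
  if list_eq_dec Req_EM_T p y then x0 else p.

Lemma crt_back s X y x0 :
  In x0 X ->
  (forall u, In u X -> dist u y <= s -> dist u x0 <= s) ->
  forall a b, clos_refl_trans point (vr_edge s (y :: X)) a b ->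
  clos_refl_trans point (vr_edge s X) (gmap y x0 a) (gmap y x0 b).
Proof.
  intros Hx0 HA a b H; induction H as [a b Hab| |]; [|apply rt_refl|eapply rt_trans; eauto].
  destruct Hab as [Ha [Hb Hd]]. unfold gmap.
  destruct (list_eq_dec Req_EM_T a y) as [ea|na];
  destruct (list_eq_dec Req_EM_T b y) as [eb|nb]; subst.
  - apply rt_refl.
  - destruct Hb as [Hb|Hb]; [congruence|].
    apply rt_step; repeat split; auto. rewrite dist_sym. apply HA; auto. now rewrite dist_sym.
  - destruct Ha as [Ha|Ha]; [congruence|].
    apply rt_step; repeat split; auto.
  - destruct Ha as [Ha|Ha]; [congruence|]. destruct Hb as [Hb|Hb]; [congruence|].
    apply rt_step; repeat split; auto.
Qed.

Lemma gmap_id y x0 X p : ~ In y X -> In p X -> gmap y x0 p = p.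
Proof.
  intros Hy Hp. unfold gmap. destruct (list_eq_dec Req_EM_T p y); subst; tauto.
Qed.

Definition Dset (s : R) (X : list point) (y : point) (C : point -> Prop) : point -> Prop :=
  fun w => In w (y :: X) /\ exists z, C z /\ clos_refl_trans point (vr_edge s (y :: X)) z w.

Lemma Dset_comp s X y x : In x X ->
  Dset s X y (component s X x) = component s (y :: X) x.
Proof.
  intros Hx. apply functional_extensionality; intro w. apply propositional_extensionality.
  unfold Dset, component; split.
  - intros [Hw [z [[Hz H1] H2]]]. split; auto. eapply rt_trans; [apply crt_mono; eauto|eauto].
  - intros [Hw H]. split; auto. exists x. split; [split; auto; apply rt_refl|auto].
Qed.

Lemma pi0_eq s Z (a b : pi0 s Z) : proj1_sig a = proj1_sig b -> a = b.
Proof.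
  destruct a as [a pa], b as [b pb]; simpl; intros ->. f_equal. apply proof_irrelevance.
Qed.

Theorem corollary12 (n : nat) (X : list point) (y x0 : point) (r : R) (sl : list R) :
  NoDup X -> (2 <= length X)%nat ->
  Forall (fun p => length p = n) X -> length y = n -> ~ In y X ->
  phase_change_list X sl ->
  In x0 X -> 0 < r -> dist y x0 < r ->
  (forall i, (S i < length sl)%nat -> r < nth (S i) sl 0 - nth i sl 0) ->
  forall i, (1 <= i < length sl)%nat ->
    exists f : pi0 (nth i sl 0) X -> pi0 (nth i sl 0) (y :: X),
      (forall (C : pi0 (nth i sl 0) X) (x : point), In x X ->
         proj1_sig C = component (nth i sl 0) X x ->
         proj1_sig (f C) = component (nth i sl 0) (y :: X) x) /\
      (forall a b, f a = f b -> a = b) /\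
      (forall c, exists a, f a = c).
Proof.
  intros _ _ Hlen Hy Hyn [Hinc Hsl] Hx0 Hr Hyx0 Hgap i Hi.
  set (s := nth i sl 0).
  assert (Hln : forall u, In u X -> length u = n) by (intros; eapply Forall_forall in Hlen; eauto).
  assert (Hge0 : forall t, In t sl -> 0 <= t).
  { intros t Ht. apply Hsl in Ht. destruct Ht as [a [b [_ [_ ->]]]]. apply sqrt_pos. }
  assert (hs : r < s).
  { assert (h1 := Hgap 0%nat ltac:(lia)).
    assert (h0 := Hge0 (nth 0 sl 0) (nth_In sl 0 (n:=0%nat) ltac:(lia))).
    assert (h2 := nth_mono_le sl Hinc 1 i ltac:(lia) ltac:(lia)). unfold s. lra. }
  assert (HA : forall u, In u X -> dist u y <= s -> dist u x0 <= s).
  { intros u Hu Hd.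
    assert (l1 : length u = length y) by (rewrite Hln, Hy; auto).
    assert (l2 : length y = length x0) by (rewrite Hy, Hln; auto).
    assert (ht := dist_tri u y x0 l1 l2).
    assert (Hin : In (dist u x0) sl) by (apply Hsl; eauto).
    destruct (In_nth _ _ 0 Hin) as [j [Hj Ej]]. rewrite <- Ej.
    destruct (Nat.le_gt_cases j i) as [Hji|Hji].
    - apply nth_mono_le; auto; lia.
    - exfalso. assert (g := Hgap i ltac:(lia)).
      assert (m := nth_mono_le sl Hinc (S i) j ltac:(lia) Hj). fold s in g. lra. }
  assert (Hys : dist y x0 <= s) by lra.
  assert (Hc : forall C : pi0 s X, exists z, In z (y :: X) /\
             Dset s X y (proj1_sig C) = component s (y :: X) z).
  { intros [C [z [Hz ->]]]. simpl. exists z. split; [now right|]. now apply Dset_comp. }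
  exists (fun C => exist _ (Dset s X y (proj1_sig C)) (Hc C)).
  split; [|split].
  - intros C x Hx E. simpl. rewrite E. now apply Dset_comp.
  - intros [a [xa [Ha ->]]] [b [xb [Hb ->]]] E.
    apply (f_equal (@proj1_sig _ _)) in E. simpl in E.
    rewrite !Dset_comp in E by auto.
    apply pi0_eq; simpl.
    assert (Hm : component s (y :: X) xb xa) by (rewrite <- E; split; [now right|apply rt_refl]).
    destruct Hm as [_ Hm].
    apply (crt_back s X y x0 Hx0 HA) in Hm. rewrite !(gmap_id y x0 X) in Hm by auto.
    assert (Hm' := crt_sym s X (edge_sym s X) _ _ Hm).
    apply functional_extensionality; intro w. apply propositional_extensionality.
    unfold component; split; intros [Hw Hr']; split; auto; eapply rt_trans; eauto.
  - intros [c [z [Hz ->]]].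
    destruct Hz as [<-|Hz].
    + exists (exist _ (component s X x0) (ex_intro _ x0 (conj Hx0 eq_refl))).
      apply pi0_eq; simpl. rewrite Dset_comp by auto.
      assert (e1 : clos_refl_trans point (vr_edge s (y :: X)) x0 y).
      { apply rt_step. repeat split; simpl; auto. now rewrite dist_sym. }
      assert (e2 : clos_refl_trans point (vr_edge s (y :: X)) y x0).
      { apply rt_step. repeat split; simpl; auto. }
      apply functional_extensionality; intro w. apply propositional_extensionality.
      unfold component; split; intros [Hw Hr']; split; auto; eapply rt_trans; eauto.
    + exists (exist _ (component s X z) (ex_intro _ z (conj Hz eq_refl))).
      apply pi0_eq; simpl. now rewrite Dset_comp.
Qed.
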